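(* Assume the Standing setup and the Time series setup, suppose that $R(z)$ is analytic on $\mathcal V_\epsilon\cup\mathcal W_\theta$ for some $\epsilon>0$ and $\theta>0$, that $R$ has a simple pole at $z=1$ (i.e. $T_{-1}\ne0$ and $T_{-k}=0$ for $k\ge2$), and that $x(-1)=c\in T_{-1}(Y)$. Then $T_{-1}(Y)=P(X)$, and for every integer $t\ge0$ $$x(t)=T_{-1}\Big[C_1c-\sum_{s=0}^tg(t-s)\Big]+\sum_{s=0}^tV_s\,g(t-s).$$ Consequently, for every bounded linear functional $f\in X^*$ with $f(u)=0$ for all $u\in T_{-1}(Y)$, one has $f(x(t))=\sum_{s=0}^tf\big(V_sg(t-s)\big)$ for all $t\ge0$.
   Context: Standing setup. Let $X,Y$ be complex Banach spaces, let $\mathcal B(X,Y)$ denote the bounded linear operators from $X$ to $Y$ ($\mathcal B(X)=\mathcal B(X,X)$), and let $I_X$ be the identity on $X$. Let $A_0,A_1\in\mathcal B(X,Y)$, let $A(z)=A_0+A_1z$ ($z\in\mathbb C$), and set $C_0=A_0+A_1$, $C_1=A_1$, so that $A(z)=C_0+C_1(z-1)$. Let $R(z)=A(z)^{-1}\in\mathcal B(Y,X)$ where this inverse exists. For $\epsilon>0$ let $\mathcal V_\epsilon=\{z\in\mathbb C:|z|<1+\epsilon,\ z\ne1\}$, and for $\theta>0$ let $\mathcal W_\theta=\{z\in\mathbb C:0<|z-1|<1+\theta\}$. If $R$ is analytic on $\mathcal V_\epsilon$ then it has a Laurent expansion $R(z)=\sum_{j\in\mathbb Z}T_j(z-1)^j$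 on $0<|z-1|<\epsilon$ with $T_j\in\mathcal B(Y,X)$, and (known facts) $T_{-k}=(-1)^{k-1}(T_{-1}C_0)^{k-1}T_{-1}$ for $k\ge1$, $T_\ell=(-1)^\ell(T_0C_1)^\ell T_0$ for $\ell\ge0$, $\|(T_{-1}C_0)^k\|^{1/k}\to0$, $T_{-1}C_1+T_0C_0=I_X$, $C_1T_{-1}+C_0T_0=I_Y$, $T_{-1}C_iT_0=0$ and $T_0C_iT_{-1}=0$ for $i=0,1$; moreover $P=T_{-1}C_1$ and $P^c=I_X-P=T_0C_0$ are complementary projections on $X$ and $Q=C_1T_{-1}$, $Q^c=I_Y-Q=C_0T_0$ are complementary projections on $Y$. The singular part $R_{\rm sin}(z)=\sum_{k\ge1}T_{-k}(z-1)^{-k}$ converges for all $z\ne1$ and the regular part is $R_{\rm reg}(z)=\sum_{\ell\ge0}T_\ell(z-1)^\ell$. Define, for integers $s\ge0$, $U_s=-(I_X-T_{-1}C_0)^{-s-1}T_{-1}$ (these are the Maclaurin coefficients of $R_{\rm sin}$) and, whenever $I_X-T_0C_1$ is invertible, $V_s=(-1)^s(I_X-T_0C_1)^{-s-1}(T_0C_1)^sT_0$. Time series setup. Let $(\Omega,\Sigma,\mu)$ be a probability space and $\{n(t)\}_{t\in\mathbb Z}$ a sequence of i.i.d. $X$-valued (Bochner measurable) random variables with $\mathbb E\|n(t)\|^2<\infty$ and $\mathbb E[n(t)]=0$. Let $F_0,F_1\in\mathcal B(X,Y)$ and $g(t)=F_0n(t)+F_1n(t-1)$ for $t\in\mathbb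 Z$. The $X$-valued random sequence $\{x(t)\}_{t\ge-1}$ satisfies $x(-1)=c$ and $A_0x(t)+A_1x(t-1)=g(t)$ for every integer $t\ge0$. Let $g_+(t)=g(t)$ for $t\ge0$ and $g_+(t)=0$ for $t<0$. For integers $t\ge0$, $k\ge1$, $\ell\ge0$ write $\nabla^{-k}g_+(t)=\sum_{s=0}^t\binom{s+k-1}{s}g(t-s)$, $\nabla^\ell g_+(t)=\sum_{s=0}^{\min\{\ell,t\}}\binom{\ell}{s}(-1)^sg(t-s)$ and $\nabla^\ell g(t)=\sum_{s=0}^{\ell}\binom{\ell}{s}(-1)^sg(t-s)$. *)

(* Defs.v *)
From Stdlib Require Import Reals ZArith.
From Coquelicot Require Import Coquelicot.
Open Scope R_scope.

Section Ops.
Context {X Y : NormedModule C_AbsRing}.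

(* Convergence of a sequence of (bounded) operators Y -> X in operator norm:
   sup_{||y||<=1} ||S N y - L y|| -> 0, written without the sup. *)
Definition op_conv (S : nat -> Y -> X) (L : Y -> X) : Prop :=
  forall e : R, 0 < e -> exists N0 : nat, forall N : nat, (N0 <= N)%nat ->
    forall y : Y, norm (minus (S N y) (L y)) <= e * norm y.

Definition is_bounded_inverse (A : Y -> X) (B : X -> Y) : Prop :=
  is_linear B /\ (forall x : X, A (B x) = x) /\ (forall y : Y, B (A y) = y).

Definition analytic_on (Rf : C -> Y -> X) (D : C -> Prop) : Prop :=
  forall z0 : C, D z0 ->
    exists r : R, 0 < r /\ (forall z : C, Cmod (z - z0) < r -> D z) /\
      exists B : nat -> Y -> X, (forall j, is_linear (B j)) /\
        forall z : C, Cmod (z - z0) < r ->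
          op_conv (fun N y => sum_n (fun j => scal (pow_n (z - z0)%C j) (B j y)) N) (Rf z).

Definition laurent_expansion (Rf : C -> Y -> X) (T : Z -> Y -> X) (a : C) (e : R) : Prop :=
  (forall j, is_linear (T j)) /\
  forall z : C, 0 < Cmod (z - a) < e ->
    exists Ssin Sreg : Y -> X,
      op_conv (fun N y => sum_n (fun k => scal (pow_n (Cinv (z - a)) (S k))
                                            (T (- Z.of_nat (S k))%Z y)) N) Ssin /\
      op_conv (fun N y => sum_n (fun l => scal (pow_n (z - a)%C l) (T (Z.of_nat l) y)) N) Sreg /\
      forall y : Y, Rf z y = plus (Ssin y) (Sreg y).

(* V_s = (-1)^s J^{s+1} (T0 C1)^s T0, where J = (I_X - T0 C1)^{-1}. *)
Definition Vcoef (J : Y -> Y) (T0 : X -> Y) (C1 : Y -> X) (s : nat) : X -> Y :=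
  fun u => scal (pow_n (RtoC (-1)) s)
                (Nat.iter (S s) J (Nat.iter s (fun v => T0 (C1 v)) (T0 u))).
End Ops.

Definition VW_domain (eps theta : R) (z : C) : Prop :=
  (Cmod z < 1 + eps /\ z <> RtoC 1) \/ (0 < Cmod (z - RtoC 1) < 1 + theta).

Definition gseq {X Y : NormedModule C_AbsRing} {Omega : Type}
  (F0 F1 : X -> Y) (n : Z -> Omega -> X) (t : Z) (w : Omega) : Y :=
  plus (F0 (n t w)) (F1 (n (t - 1)%Z w)).

(* Main.v *)
Require Import Defs.
From Stdlib Require Import Reals ZArith.
From Coquelicot Require Import Coquelicot.
From Stdlib Require Import Lra Lia.
From Stdlib Require Import ssreflect.
Open Scope R_scope.

Definition cv {V : NormedModule C_AbsRing} (s : nat -> V) (l : V) : Prop :=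
  forall e : R, 0 < e -> exists N0 : nat, forall N : nat, (N0 <= N)%nat -> norm (minus (s N) l) <= e.

Definition ps {V : NormedModule C_AbsRing} (a : nat -> V) (t : R) (N : nat) : V :=
  sum_n (fun l => scal (pow_n (RtoC t) l) (a l)) N.

Lemma pow_RtoC (t : R) (l : nat) : pow_n (K := C_AbsRing) (RtoC t) l = RtoC (t ^ l).
Proof.
  induction l as [|l IH]; simpl. reflexivity.
  rewrite IH. change (mult (RtoC t) (RtoC (t ^ l)) = RtoC (t * t ^ l)).
  rewrite RtoC_mult. reflexivity.
Qed.

Lemma abs_RtoC (x : R) : abs (K := C_AbsRing) (RtoC x) = Rabs x.
Proof. apply Cmod_R. Qed.

Lemma norm_scalR {V : NormedModule C_AbsRing} (x : R) (v : V) :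
  norm (scal (RtoC x) v) <= Rabs x * norm v.
Proof. rewrite -abs_RtoC. exact (@norm_scal C_AbsRing V _ _). Qed.

Lemma scal_RR {V : NormedModule C_AbsRing} (x y : R) (v : V) :
  scal (RtoC x) (scal (RtoC y) v) = scal (RtoC (x * y)) v.
Proof. rewrite scal_assoc. f_equal. change (RtoC x * RtoC y = RtoC (x*y))%C. now rewrite RtoC_mult. Qed.

Lemma scal_R1 {V : NormedModule C_AbsRing} (v : V) : scal (RtoC 1) v = v.
Proof. apply (scal_one (K := C_AbsRing)). Qed.

Lemma le_eps (x y : R) : (forall e, 0 < e -> x <= e + y) -> x <= y.
Proof.
  intros H. destruct (Rle_or_lt x y) as [h|h]; auto.
  specialize (H ((x - y)/2)). lra.
Qed.

Lemma norm_minus_sym {V : NormedModule C_AbsRing} (x y : V) : norm (minus x y) = norm (minus y x).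
Proof. rewrite <- opp_minus. apply norm_opp. Qed.

Lemma norm_minus_tri {V : NormedModule C_AbsRing} (x y r : V) :
  norm (minus x y) <= norm (minus x r) + norm (minus r y).
Proof. rewrite (minus_trans r). apply norm_triangle. Qed.

Lemma cv_unique {V : NormedModule C_AbsRing} (s : nat -> V) l1 l2 : cv s l1 -> cv s l2 -> l1 = l2.
Proof.
  intros H1 H2.
  assert (H : norm (minus l1 l2) <= 0).
  { apply le_eps. intros e he.
    destruct (H1 (e/2)) as [N1 h1]; [lra|]. destruct (H2 (e/2)) as [N2 h2]; [lra|].
    specialize (h1 (N1 + N2)%nat ltac:(lia)). specialize (h2 (N1+N2)%nat ltac:(lia)).
    pose proof (norm_minus_tri l1 l2 (s (N1+N2)%nat)) as Ht.
    rewrite (norm_minus_sym l1 (s _)) in Ht. lra. }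
  assert (norm (minus l1 l2) = 0) by (pose proof (norm_ge_0 (minus l1 l2)); lra).
  apply norm_eq_zero in H0.
  apply (plus_reg_r (opp l2)). rewrite plus_opp_r. exact H0.
Qed.

Lemma cv_ext {V : NormedModule C_AbsRing} (s s' : nat -> V) l :
  (forall N, s N = s' N) -> cv s l -> cv s' l.
Proof. intros E H e he. destruct (H e he) as [N0 h]. exists N0. intros N hN. rewrite -E. auto. Qed.

Lemma cv_const_eq {V : NormedModule C_AbsRing} (s : nat -> V) c l :
  (forall N, s N = c) -> cv s l -> l = c.
Proof.
  intros E H. apply (cv_unique s); auto. intros e he. exists O. intros N _.
  rewrite E minus_eq_zero. replace (norm _) with 0 by (symmetry; apply norm_zero). lra.
Qed.

Lemma plus_minus_distr_G {G : AbelianGroup} (a b c d : G) :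
  minus (plus a b) (plus c d) = plus (minus a c) (minus b d).
Proof.
  unfold minus. rewrite opp_plus. rewrite !plus_assoc. f_equal.
  rewrite -!plus_assoc. f_equal. apply plus_comm.
Qed.
Lemma plus_minus_distr {G : NormedModule C_AbsRing} (a b c d : G) :
  minus (plus a b) (plus c d) = plus (minus a c) (minus b d).
Proof. exact (plus_minus_distr_G (G := NormedModule.AbelianGroup _ G) a b c d). Qed.

Lemma cv_plus {V : NormedModule C_AbsRing} (s s' : nat -> V) l l' :
  cv s l -> cv s' l' -> cv (fun N => plus (s N) (s' N)) (plus l l').
Proof.
  intros H H' e he.
  destruct (H (e/2)) as [N1 h1]; [lra|]. destruct (H' (e/2)) as [N2 h2]; [lra|].
  exists (N1 + N2)%nat. intros N hN.
  rewrite plus_minus_distr.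
  eapply Rle_trans. apply norm_triangle.
  specialize (h1 N ltac:(lia)). specialize (h2 N ltac:(lia)). lra.
Qed.

Lemma cv_lin {V W : NormedModule C_AbsRing} (f : V -> W) (s : nat -> V) l :
  is_linear f -> cv s l -> cv (fun N => f (s N)) (f l).
Proof.
  intros Hf H e he. destruct (linear_norm f Hf) as [M [HM HMb]].
  destruct (H (e / M)) as [N0 h]. apply Rdiv_lt_0_compat; lra.
  exists N0. intros N hN. rewrite -(linear_minus f _ _ Hf).
  eapply Rle_trans. apply HMb. specialize (h N hN).
  apply Rmult_le_compat_l with (r := M) in h; [|lra].
  replace (M * (e/M)) with e in h by (field; lra). exact h.
Qed.

Lemma scal_minusR {V : NormedModule C_AbsRing} (k:R) (a b : V) :
  scal (RtoC k) (minus a b) =  minus (scal (RtoC k) a) (scal (RtoC k) b).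
Proof. rewrite /minus. rewrite scal_distr_l scal_opp_r. reflexivity. Qed.

Lemma cv_scalR {V : NormedModule C_AbsRing} (k : R) (s : nat -> V) l :
  cv s l -> cv (fun N => scal (RtoC k) (s N)) (scal (RtoC k) l).
Proof.
  intros H e he. destruct (H (e / (Rabs k + 1))) as [N0 h].
  apply Rdiv_lt_0_compat; [lra| pose proof (Rabs_pos k); lra].
  exists N0. intros N hN.
  rewrite -scal_minusR.
  eapply Rle_trans. apply norm_scalR. specialize (h N hN).
  pose proof (Rabs_pos k). pose proof (norm_ge_0 (minus (s N) l)).
  apply Rmult_le_compat_l with (r := Rabs k + 1) in h; [|lra].
  replace ((Rabs k + 1) * (e / (Rabs k + 1))) with e in h by (field; lra). nra.
Qed.

Lemma lin_sum {V W : NormedModule C_AbsRing} (f : V -> W) (a : nat -> V) N :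
  is_linear f -> f (sum_n a N) = sum_n (fun k => f (a k)) N.
Proof.
  intros Hf. induction N as [|N IH].
  - rewrite !sum_O. reflexivity.
  - rewrite !sum_Sn (linear_plus f Hf) IH. reflexivity.
Qed.

Lemma zero_small {V : NormedModule C_AbsRing} (v : V) r K :
  0 < r -> (forall t, 0 < t < r -> norm v <= K * t) -> v = zero.
Proof.
  intros hr H. apply norm_eq_zero.
  pose proof (norm_ge_0 v).
  destruct (Rle_or_lt (norm v) 0) as [h|h]; [lra|]. exfalso.
  set (K' := Rabs K + 1).
  assert (hK' : 0 < K') by (unfold K'; pose proof (Rabs_pos K); lra).
  set (t := Rmin (r/2) (norm v / (2 * K'))).
  assert (ht1 : 0 < t). { unfold t. apply Rmin_glb_lt. lra. apply Rdiv_lt_0_compat; lra. }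
  assert (ht2 : t <= r/2) by apply Rmin_l.
  assert (ht3 : t <= norm v / (2*K')) by apply Rmin_r.
  specialize (H t ltac:(lra)).
  assert (K * t <= K' * t). { apply Rmult_le_compat_r. lra. unfold K'. pose proof (Rle_abs K). lra. }
  apply Rmult_le_compat_l with (r := K') in ht3; [|lra].
  replace (K' * (norm v / (2 * K'))) with (norm v / 2) in ht3 by (field; lra). lra.
Qed.

Lemma minus_zero_eq {G : NormedModule C_AbsRing} (x y : G) : minus x y = zero -> x = y.
Proof. intros H. apply (plus_reg_r (opp y)). rewrite plus_opp_r. exact H. Qed.

Lemma le_sum_R (f : nat -> R) N l : (forall k, 0 <= f k) -> (l <= N)%nat -> f l <= sum_f_R0 f N.
Proof.
  intros Hf. induction N as [|N IH]; intros Hl.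
  - have -> : l = O by lia. simpl. lra.
  - simpl. destruct (Nat.eq_dec l (S N)) as [->|ne].
    + have := (cond_pos_sum f N Hf). lra.
    + have := IH ltac:(lia). have := Hf (S N). lra.
Qed.

Lemma minus_plus_l {V : NormedModule C_AbsRing} (x y : V) : minus (plus x y) x = y.
Proof.
  rewrite /minus (plus_comm x y) -plus_assoc plus_opp_r plus_zero_r. reflexivity.
Qed.

Lemma ps_S {V : NormedModule C_AbsRing} (a : nat -> V) t N :
  ps a t (S N) = plus (ps a t N) (scal (RtoC (t ^ (S N))) (a (S N))).
Proof. rewrite /ps sum_Sn pow_RtoC. reflexivity. Qed.

Lemma ps_0 {V : NormedModule C_AbsRing} (a : nat -> V) t : ps a t O = a O.
Proof. rewrite /ps sum_O pow_RtoC /=. apply scal_R1. Qed.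

Lemma term_bound {V : NormedModule C_AbsRing} (a : nat -> V) r0 L0 :
  0 < r0 -> cv (ps a r0) L0 -> exists M, 0 <= M /\ forall l, norm (a l) * r0 ^ l <= M.
Proof.
  intros hr H. destruct (H 1 ltac:(lra)) as [N0 hN0].
  set (tm := fun l => norm (scal (RtoC (r0 ^ l)) (a l))).
  exists (2 + sum_f_R0 tm N0). split.
  { have := cond_pos_sum tm N0 (fun k => norm_ge_0 _). lra. }
  intros l.
  have hpos : 0 < r0 ^ l by apply pow_lt.
  have Ha : norm (a l) * r0 ^ l <= tm l.
  { rewrite /tm.
    have E : a l = scal (RtoC (/ r0 ^ l)) (scal (RtoC (r0 ^ l)) (a l)).
    { rewrite scal_RR Rinv_l; try lra. by rewrite scal_R1. }
    rewrite {1}E.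
    have := norm_scalR (/ r0 ^ l) (scal (RtoC (r0 ^ l)) (a l)).
    have hR : Rabs (/ r0^l) = / r0^l.
    { apply Rabs_right. have := Rinv_0_lt_compat _ hpos. lra. }
    rewrite hR.
    intros h.
    apply Rmult_le_compat_r with (r := r0 ^ l) in h; [|lra].
    have e : forall y, / r0 ^ l * y * r0 ^ l = y by intros y; field; lra.
    rewrite e in h. lra. }
  destruct (le_lt_dec l N0) as [hl|hl].
  - have := le_sum_R tm N0 l (fun k => norm_ge_0 _) hl. lra.
  - destruct l as [|l]; [lia|].
    have e1 := hN0 (S l) ltac:(lia). have e2 := hN0 l ltac:(lia).
    have : tm (S l) <= 2.
    { rewrite /tm.
      have -> : scal (RtoC (r0 ^ S l)) (a (S l)) = minus (ps a r0 (S l)) (ps a r0 l).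
      { by rewrite ps_S minus_plus_l. }
      have := norm_minus_tri (ps a r0 (S l)) (ps a r0 l) L0.
      rewrite (norm_minus_sym L0). lra. }
    have := cond_pos_sum tm N0 (fun k => norm_ge_0 _). lra.
Qed.

Lemma minus_plus_r {V : NormedModule C_AbsRing} (u x c : V) : minus (plus u x) c = plus (minus u c) x.
Proof. rewrite /minus -!plus_assoc (plus_comm x). reflexivity. Qed.

Lemma minus_split {V : NormedModule C_AbsRing} (S a x : V) : minus S a = plus (minus S (plus a x)) x.
Proof.
  rewrite /minus opp_plus !plus_assoc -(plus_assoc _ (opp x)) plus_opp_l plus_zero_r. reflexivity.
Qed.

Lemma tail {V : NormedModule C_AbsRing} (a : nat -> V) r0 L0 :
  0 < r0 -> cv (ps a r0) L0 ->
  exists K, 0 <= K /\ forall t Sv, 0 < t <= r0/2 -> cv (ps a t) Sv ->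
    norm (minus Sv (a O)) <= K*t /\
    norm (minus Sv (plus (a O) (scal (RtoC t) (a 1%nat)))) <= K*(t*t).
Proof.
  intros hr H. destruct (term_bound a r0 L0 hr H) as [M [HM Hb]].
  exists (2*M/(r0*r0) + 2*M/r0). split.
  { have : 0 <= 2*M/(r0*r0) by apply Rdiv_le_0_compat; nra.
    have : 0 <= 2*M/r0 by apply Rdiv_le_0_compat; nra. lra. }
  intros t Sv ht HS.
  set q := t / r0.
  have hq0 : 0 < q by apply Rdiv_lt_0_compat; lra.
  have hq1 : q <= 1/2 by (rewrite /q; apply Rmult_le_reg_r with r0; [lra|]; field_simplify; lra).
  have Ht : forall l, norm (scal (RtoC (t ^ l)) (a l)) <= M * q ^ l.
  { intros l. eapply Rle_trans. apply norm_scalR.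
    rewrite -RPow_abs Rabs_right; last lra.
    have -> : t = q * r0 by (rewrite /q; field; lra).
    rewrite Rpow_mult_distr.
    have := Hb l. have := pow_le q l ltac:(lra). nra. }
  set c := plus (a O) (scal (RtoC t) (a 1%nat)).
  have HD : forall N, norm (minus (ps a t (S (S N))) c) <= 2*M*q^2 - 2*M*q^(N+3).
  { induction N as [|N IH].
    - rewrite ps_S ps_S ps_0 /c pow_1 minus_plus_l.
      have := Ht 2%nat. have := pow_le q 2 ltac:(lra).
      have -> : q ^ (0+3) = q * q^2 by simpl; ring.
      intros h1 h2. have h3 : 0 <= M * q^2 * (1 - 2*q) by (apply Rmult_le_pos; [apply Rmult_le_pos|]; lra).
      nra.
    - rewrite ps_S minus_plus_r.
      eapply Rle_trans. apply norm_triangle.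
      have := Ht (S (S (S N))).
      have -> : S (S (S N)) = (N + 3)%nat by lia.
      have -> : (S N + 3)%nat = S (N + 3) by lia.
      intros h2. have h1 := pow_le q (N+3) ltac:(lra).
      have h3 : 0 <= M * q^(N+3) * (1 - 2*q) by (apply Rmult_le_pos; [apply Rmult_le_pos|]; lra).
      simpl. nra. }
  have Hc : norm (minus Sv c) <= 2*M*q^2.
  { apply le_eps. intros e he. destruct (HS e he) as [N0 h].
    have := norm_minus_tri Sv c (ps a t (S (S N0))).
    have := HD N0. have := h (S (S N0)) ltac:(lia).
    rewrite (norm_minus_sym (ps a t _)).
    have := pow_le q (N0+3) ltac:(lra). nra. }
  have E : 2*M*q^2 = 2*M/(r0*r0) * (t*t) by (rewrite /q; simpl; field; lra).
  split.
  - rewrite (minus_split Sv (a O) (scal (RtoC t) (a 1%nat))) -/c.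
    eapply Rle_trans. apply norm_triangle.
    eapply Rle_trans. apply Rplus_le_compat_l. apply norm_scalR.
    rewrite Rabs_right; last lra.
    have : norm (a 1%nat) <= M / r0.
    { apply Rmult_le_reg_r with r0; [lra|]. field_simplify; [|lra]. have := Hb 1%nat. rewrite pow_1. lra. }
    have : 0 <= 2*M/(r0*r0) by apply Rdiv_le_0_compat; nra.
    have : 2*M/(r0*r0) * (t*t) <= M/r0 * t.
    { have -> : 2*M/(r0*r0) * (t*t) = (2*t/r0) * (M/r0 * t) by field; lra.
      have : 2*t/r0 <= 1 by (apply Rmult_le_reg_r with r0; [lra|]; field_simplify; lra).
      have : 0 <= M/r0*t by (apply Rmult_le_pos; [apply Rdiv_le_0_compat|]; lra).
      nra. }
    have : 0 <= norm (a 1%nat) by apply norm_ge_0.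
    have -> : (2 * M / (r0 * r0) + 2 * M / r0) * t = 2*M/(r0*r0)*t + 2 * (M/r0*t) by field; lra.
    intros h1 h2 h3 h4.
    have : t * norm (a 1%nat) <= t * (M/r0) by (apply Rmult_le_compat_l; lra).
    have : 0 <= 2*M/(r0*r0)*t by (apply Rmult_le_pos; lra).
    lra.
  - have : 0 <= 2*M/r0 * (t*t) by (apply Rmult_le_pos; [apply Rdiv_le_0_compat|]; nra).
    rewrite Rmult_plus_distr_r. lra.
Qed.

Lemma plus_minus_back {V : NormedModule C_AbsRing} (x y : V) : x = plus (minus x y) y.
Proof. rewrite /minus -plus_assoc plus_opp_l plus_zero_r. reflexivity. Qed.

Lemma norm_minus_le {V : NormedModule C_AbsRing} (x y : V) : norm (minus x y) <= norm x + norm y.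
Proof. rewrite /minus. eapply Rle_trans. apply norm_triangle. rewrite norm_opp. lra. Qed.

Lemma norm_le_via {V : NormedModule C_AbsRing} (x y : V) : norm x <= norm (minus x y) + norm y.
Proof. rewrite {1}(plus_minus_back x y). apply norm_triangle. Qed.

Lemma solve_plus {V : NormedModule C_AbsRing} (x Y d : V) : plus x Y = d -> x = minus d Y.
Proof. intros <-. rewrite /minus -plus_assoc plus_opp_r plus_zero_r. reflexivity. Qed.

Lemma scal_inv_t {V : NormedModule C_AbsRing} (t : R) (v : V) : t <> 0 ->
  v = scal (RtoC t) (scal (RtoC (/t)) v).
Proof. intros ht. rewrite scal_RR Rinv_r //. by rewrite scal_R1. Qed.

Lemma scal_inv_t' {V : NormedModule C_AbsRing} (t : R) (v : V) : t <> 0 ->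
  v = scal (RtoC (/t)) (scal (RtoC t) v).
Proof. intros ht. rewrite scal_RR Rinv_l //. by rewrite scal_R1. Qed.

Lemma minus_cancel_l {V : NormedModule C_AbsRing} (c U a : V) : minus (plus c U) (plus c a) = minus U a.
Proof. rewrite plus_minus_distr minus_eq_zero plus_zero_l. reflexivity. Qed.

Lemma minus_plus_ll {V : NormedModule C_AbsRing} (a X Y : V) : minus (plus (plus a X) Y) a = plus X Y.
Proof. rewrite -plus_assoc minus_plus_l. reflexivity. Qed.

Lemma plus_reg_lV {V : NormedModule C_AbsRing} (r x y : V) : plus r x = plus r y -> x = y.
Proof. exact (@plus_reg_l (NormedModule.AbelianGroup _ V) r x y). Qed.

Lemma extract {V : NormedModule C_AbsRing} (p c d : V) (a b : nat -> V) r : 0 < r ->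
  (forall t, 0 < t < r -> exists Sa Sb : V, cv (ps a t) Sa /\ cv (ps b t) Sb /\
     plus (scal (RtoC (/t)) p) (plus c (plus Sa (scal (RtoC t) Sb))) = d) ->
  p = zero /\ plus c (a O) = d /\ plus (a 1%nat) (b O) = zero.
Proof.
  intros hr H.
  destruct (H (r/2) ltac:(lra)) as [Sa0 [Sb0 [ha0 [hb0 _]]]].
  destruct (tail a (r/2) Sa0 ltac:(lra) ha0) as [Ka [hKa Ta]].
  destruct (tail b (r/2) Sb0 ltac:(lra) hb0) as [Kb [hKb Tb]].
  set r1 := Rmin (r/4) 1.
  have hr1 : 0 < r1 by (apply Rmin_glb_lt; lra).
  have hr1a : r1 <= r/4 by apply Rmin_l.
  have hr1b : r1 <= 1 by apply Rmin_r.
  have Hcom : forall t, 0 < t < r1 -> exists Sa Sb : V,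
     plus (scal (RtoC (/t)) p) (plus c (plus Sa (scal (RtoC t) Sb))) = d /\
     norm (minus Sa (a O)) <= Ka * t /\
     norm (minus Sa (plus (a O) (scal (RtoC t) (a 1%nat)))) <= Ka * (t*t) /\
     norm (minus Sb (b O)) <= Kb * t.
  { intros t ht. destruct (H t ltac:(lra)) as [Sa [Sb [h1 [h2 h3]]]].
    exists Sa, Sb. split; first done.
    have ht' : 0 < t <= r/2/2 by lra.
    destruct (Ta t Sa ht' h1) as [e1 e2]. destruct (Tb t Sb ht' h2) as [e3 e4].
    repeat split; assumption. }
  have Hp : p = zero.
  { apply (zero_small p r1 (norm d + norm c + norm (a O) + Ka + norm (b O) + Kb) hr1).
    intros t ht. destruct (Hcom t ht) as [Sa [Sb [E [e1 [e2 e3]]]]].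
    apply solve_plus in E.
    rewrite (scal_inv_t t p); last lra. rewrite E.
    eapply Rle_trans. apply norm_scalR. rewrite Rabs_right; last lra.
    have hY := norm_minus_le d (plus c (plus Sa (scal (RtoC t) Sb))).
    have hY2 := norm_triangle c (plus Sa (scal (RtoC t) Sb)).
    have hY3 := norm_triangle Sa (scal (RtoC t) Sb).
    have hY4 := norm_scalR t Sb. rewrite Rabs_right in hY4; last lra.
    have hSa := norm_le_via Sa (a O). have hSb := norm_le_via Sb (b O).
    have hb0n := norm_ge_0 (b O).
    have ht1 : t <= 1 by lra.
    have ? : t * norm (b O) <= norm (b O) by nra.
    have ? : Kb * t <= Kb by nra.
    have hKt : 0 <= Kb * t by (apply Rmult_le_pos; lra).
    have ? : t * (Kb * t) <= Kb * t.
    { have := Rmult_le_compat_r (Kb * t) t 1 hKt ht1. lra. }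
    have ? : t * (norm (b O) + Kb * t) <= norm (b O) + Kb by nra.
    have ? : Ka * t <= Ka by nra.
    have ? : 0 <= norm (minus d (plus c (plus Sa (scal (RtoC t) Sb)))) by apply norm_ge_0.
    have ? : norm (minus d (plus c (plus Sa (scal (RtoC t) Sb)))) <=
           norm d + norm c + norm (a O) + Ka + norm (b O) + Kb.
    { have ? : t * norm Sb <= t * (norm (b O) + Kb*t) by (apply Rmult_le_compat_l; lra).
      lra. }
    nra. }
  subst p.
  have Hd : d = plus c (a O).
  { apply minus_zero_eq.
    apply (zero_small _ r1 (Ka + norm (b O) + Kb) hr1).
    intros t ht. destruct (Hcom t ht) as [Sa [Sb [E [e1 [e2 e3]]]]].
    rewrite scal_zero_r plus_zero_l in E. rewrite -E.
    rewrite minus_cancel_l minus_plus_r.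
    eapply Rle_trans. apply norm_triangle.
    have hY4 := norm_scalR t Sb. rewrite Rabs_right in hY4; last lra.
    have hSb := norm_le_via Sb (b O).
    have hb0n := norm_ge_0 (b O).
    have ht1 : t <= 1 by lra.
    have ? : t * norm Sb <= t * (norm (b O) + Kb*t) by (apply Rmult_le_compat_l; lra).
    have hKt : 0 <= Kb * t by (apply Rmult_le_pos; lra).
    have ? : t * (Kb * t) <= Kb * t.
    { have := Rmult_le_compat_r (Kb * t) t 1 hKt ht1. lra. }
    have ? : norm (minus Sa (a O)) + norm (scal (RtoC t) Sb) <= Ka * t + t * norm (b O) + Kb * t by nra.
    have -> : (Ka + norm (b O) + Kb) * t = Ka * t + t * norm (b O) + Kb * t by ring.
    lra. }
  split; [done|]. split; [by rewrite Hd|].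
  apply (zero_small _ r1 (Ka + Kb) hr1).
  intros t ht. destruct (Hcom t ht) as [Sa [Sb [E [e1 [e2 e3]]]]].
  rewrite scal_zero_r plus_zero_l Hd in E. apply plus_reg_lV in E.
  rewrite (scal_inv_t' t (plus (a 1%nat) (b O))); last lra.
  rewrite scal_distr_l -(minus_plus_ll (a O)) -{2}E plus_minus_distr -scal_minusR.
  eapply Rle_trans. apply norm_scalR. rewrite Rabs_right; last (apply Rle_ge, Rlt_le, Rinv_0_lt_compat; lra).
  have h1 := norm_triangle (minus (plus (a O) (scal (RtoC t) (a 1%nat))) Sa) (scal (RtoC t) (minus (b O) Sb)).
  rewrite (norm_minus_sym _ Sa) in h1.
  have h2 := norm_scalR t (minus (b O) Sb). rewrite Rabs_right in h2; last lra.
  rewrite (norm_minus_sym (b O)) in h2.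
  have -> : (Ka + Kb) * t = / t * ((Ka + Kb) * (t*t)) by field; lra.
  apply Rmult_le_compat_l; [apply Rlt_le, Rinv_0_lt_compat; lra|].
  eapply Rle_trans; [exact h1|].
  have ? : t * norm (minus Sb (b O)) <= t*(Kb*t) by (apply Rmult_le_compat_l; lra).
  lra.
Qed.

Lemma plus_eq_zero_opp {V : NormedModule C_AbsRing} (a b : V) : plus a b = zero -> a = opp b.
Proof. intros H. apply solve_plus in H. rewrite H /minus plus_zero_l. reflexivity. Qed.

Lemma plus_zero_l_eq {V : NormedModule C_AbsRing} (a b : V) : plus zero a = b -> a = b.
Proof. by rewrite plus_zero_l. Qed.

Lemma plus_left_zero {V : NormedModule C_AbsRing} (a b : V) : plus a b = b -> a = zero.
Proof. intros H. apply (plus_reg_r b). by rewrite H plus_zero_l. Qed.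

Lemma solve_plus_r {V : NormedModule C_AbsRing} (a b w : V) : plus a b = w -> b = minus w a.
Proof. intros H. apply solve_plus. by rewrite plus_comm. Qed.

Lemma minus_zero_r {V : NormedModule C_AbsRing} (a : V) : minus a zero = a.
Proof. by rewrite /minus opp_zero plus_zero_r. Qed.

Lemma minus_plus_minus {V : NormedModule C_AbsRing} (a w b : V) : minus (plus a w) (minus w b) = plus a b.
Proof.
  rewrite /minus opp_plus opp_opp -plus_assoc. f_equal.
  rewrite plus_assoc plus_opp_r plus_zero_l. reflexivity.
Qed.

Lemma plus_cancel_opp {V : NormedModule C_AbsRing} (a u : V) : plus a (plus u (opp a)) = u.
Proof. by rewrite plus_comm -plus_assoc plus_opp_l plus_zero_r. Qed.

Lemma minus_minus {V : NormedModule C_AbsRing} (a b c : V) : minus (minus a b) c = minus a (plus c b).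
Proof. rewrite /minus opp_plus -plus_assoc (plus_comm (opp c)). reflexivity. Qed.

Lemma split_P {V : NormedModule C_AbsRing} (x p : V) : x = plus p (minus x p).
Proof. rewrite plus_comm. apply plus_minus_back. Qed.

Lemma plus_swap4 {V : NormedModule C_AbsRing} (a b c d : V) :
  plus (plus a b) (plus c d) = plus (plus a c) (plus b d).
Proof.
  rewrite -!plus_assoc. f_equal. rewrite !plus_assoc. f_equal. apply plus_comm.
Qed.

Lemma lin_plus_fun {U V : NormedModule C_AbsRing} (f g : U -> V) :
  is_linear f -> is_linear g -> is_linear (fun u => plus (f u) (g u)).
Proof.
  intros Hf Hg. apply Build_is_linear.
  - intros x y. rewrite (linear_plus f Hf) (linear_plus g Hg). apply plus_swap4.
  - intros k x. rewrite (linear_scal f Hf) (linear_scal g Hg) scal_distr_l. reflexivity.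
  - destruct (linear_norm f Hf) as [M1 [h1 H1]]. destruct (linear_norm g Hg) as [M2 [h2 H2]].
    exists (M1 + M2). split; [lra|]. intros x.
    eapply Rle_trans. apply norm_triangle. have := H1 x. have := H2 x. lra.
Qed.

Lemma sum_shift {V : NormedModule C_AbsRing} (f : nat -> V) N :
  sum_n f (S N) = plus (f O) (sum_n (fun s => f (S s)) N).
Proof.
  induction N as [|N IH].
  - by rewrite sum_Sn !sum_O.
  - rewrite sum_Sn IH sum_Sn plus_assoc. reflexivity.
Qed.

Lemma iter_comm {V : NormedModule C_AbsRing} (J K : V -> V) (HJK : forall u, J (K u) = K (J u)) n x :
  Nat.iter n J (K x) = K (Nat.iter n J x).
Proof. induction n as [|n IH]; simpl; [done|]. by rewrite IH HJK. Qed.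

Lemma RtoC_m1 : RtoC (-1) = opp (one : C_AbsRing).
Proof. apply injective_projections; simpl; ring. Qed.

Lemma iterS {A : Type} n (f : A -> A) x : Nat.iter (S n) f x = f (Nat.iter n f x).
Proof. reflexivity. Qed.

Lemma iter_comm' {U W : NormedModule C_AbsRing} (J : W -> W) (T0 : U -> W) (C1 : W -> U)
  (HJK : forall u, J (T0 (C1 u)) = T0 (C1 (J u))) n x :
  Nat.iter n J (T0 (C1 x)) = T0 (C1 (Nat.iter n J x)).
Proof. induction n as [|n IH]; [done|]. by rewrite !iterS IH HJK. Qed.

Lemma Vcoef_0 {U W : NormedModule C_AbsRing} (J : W -> W) (T0 : U -> W) (C1 : W -> U) v :
  Vcoef J T0 C1 0 v = J (T0 v).
Proof. rewrite /Vcoef /=. exact (scal_one (K := C_AbsRing) _). Qed.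

Lemma Vcoef_S {U W : NormedModule C_AbsRing} (J : W -> W) (T0 : U -> W) (C1 : W -> U)
  (HJ : is_linear J) (HT0 : is_linear T0) (HC1 : is_linear C1)
  (HJK : forall u, J (T0 (C1 u)) = T0 (C1 (J u))) s v :
  Vcoef J T0 C1 (S s) v = opp (J (T0 (C1 (Vcoef J T0 C1 s v)))).
Proof.
  rewrite /Vcoef.
  rewrite (linear_scal C1 HC1) (linear_scal T0 HT0) (linear_scal J HJ).
  rewrite (iterS s (fun v0 => T0 (C1 v0))).
  rewrite (iterS (S s) J) (iter_comm' J T0 C1 HJK).
  have -> : pow_n (K := C_AbsRing) (RtoC (-1)) (S s) = mult (RtoC (-1)) (pow_n (K := C_AbsRing) (RtoC (-1)) s) by reflexivity.
  rewrite -scal_assoc RtoC_m1 scal_opp_one. reflexivity.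
Qed.

Lemma opp_solve {V : NormedModule C_AbsRing} (a b G : V) : plus (opp a) b = G -> a = minus b G.
Proof.
  intros <-. rewrite /minus opp_plus opp_opp plus_comm -plus_assoc plus_opp_l plus_zero_r. reflexivity.
Qed.

Lemma solve_mid {V : NormedModule C_AbsRing} (a b c u : V) : plus a (plus b c) = u -> b = minus (minus u a) c.
Proof.
  intros <-. rewrite minus_plus_l /minus -plus_assoc plus_opp_r plus_zero_r. reflexivity.
Qed.

Lemma Gshift {V : NormedModule C_AbsRing} (h : Z -> V) t :
  sum_n (fun s => h (Z.of_nat (S t) - Z.of_nat s)%Z) (S t) =
  plus (h (Z.of_nat (S t))) (sum_n (fun s => h (Z.of_nat t - Z.of_nat s)%Z) t).
Proof.
  rewrite sum_shift. f_equal; try (f_equal; lia).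
  apply sum_n_ext => s. f_equal. lia.
Qed.

Lemma G0 {V : NormedModule C_AbsRing} (h : Z -> V) :
  sum_n (fun s => h (Z.of_nat 0 - Z.of_nat s)%Z) 0 = h (Z.of_nat 0).
Proof. by rewrite sum_O. Qed.

Lemma alg_main
  (X Y : CompleteNormedModule C_AbsRing)
  (A0 A1 : X -> Y) (HA0 : is_linear A0) (HA1 : is_linear A1)
  (T : Z -> Y -> X) (HTl : forall j, is_linear (T j))
  (R0 : Y -> X) (HR0 : is_linear R0) (R1 : forall y, A0 (R0 y) = y) (R2 : forall u, R0 (A0 u) = u)
  (I1 : forall u, T (-1)%Z (plus (A0 u) (A1 u)) = zero)
  (I2 : forall u, plus (T (-1)%Z (A1 u)) (T 0%Z (plus (A0 u) (A1 u))) = u)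
  (I3 : forall y, plus (A0 (T (-1)%Z y)) (A1 (T (-1)%Z y)) = zero)
  (I4 : forall y, plus (A1 (T (-1)%Z y)) (plus (A0 (T 0%Z y)) (A1 (T 0%Z y))) = y)
  (I5 : forall y, plus (plus (A0 (T 1%Z y)) (A1 (T 1%Z y))) (A1 (T 0%Z y)) = zero)
  (Omega : Type) (n : Z -> Omega -> X)
  (F0 F1 : X -> Y)
  (c : X) (Hc : exists y : Y, c = T (-1)%Z y)
  (x : Z -> Omega -> X)
  (Hxinit : forall w : Omega, x (-1)%Z w = c)
  (Hrec : forall (t : nat) (w : Omega),
      plus (A0 (x (Z.of_nat t) w)) (A1 (x (Z.of_nat t - 1)%Z w)) = gseq F0 F1 n (Z.of_nat t) w) :
  (forall u : X, (exists y : Y, u = T (-1)%Z y) <-> (exists v : X, u = T (-1)%Z (A1 v))) /\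
  exists J : X -> X,
    is_bounded_inverse (fun u : X => minus u (T 0%Z (A1 u))) J /\
    (forall (t : nat) (w : Omega),
       x (Z.of_nat t) w =
       plus (T (-1)%Z (minus (A1 c)
                (sum_n (fun s : nat => gseq F0 F1 n (Z.of_nat t - Z.of_nat s)%Z w) t)))
            (sum_n (fun s : nat => Vcoef J (T 0%Z) A1 s (gseq F0 F1 n (Z.of_nat t - Z.of_nat s)%Z w)) t)) /\
    (forall f : X -> C_NormedModule, is_linear f ->
       (forall y : Y, f (T (-1)%Z y) = zero) ->
       forall (t : nat) (w : Omega),
         f (x (Z.of_nat t) w) =
         sum_n (fun s : nat => f (Vcoef J (T 0%Z) A1 s (gseq F0 F1 n (Z.of_nat t - Z.of_nat s)%Z w))) t).
Proof.
  have HT1 := HTl (-1)%Z. have HT0 := HTl 0%Z.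
  have FF1 : forall y, T (-1)%Z (A1 (T (-1)%Z y)) = T (-1)%Z y.
  { intros y. have h := f_equal (T (-1)%Z) (I4 y).
    rewrite (linear_plus _ HT1) I1 plus_zero_r in h. exact h. }
  have FF2 : forall y, T (-1)%Z (A1 (T 0%Z y)) = zero.
  { intros y. have h := f_equal (T (-1)%Z) (I5 y).
    rewrite (linear_plus _ HT1) I1 plus_zero_l (linear_zero _ HT1) in h. exact h. }
  have FF3 : forall y, T 0%Z (A1 (T (-1)%Z y)) = zero.
  { intros y. have h1 := f_equal (T 0%Z) (I4 y). rewrite (linear_plus _ HT0) in h1.
    have h2 := I2 (T 0%Z y). rewrite FF2 plus_zero_l in h2.
    rewrite h2 in h1. exact (plus_left_zero _ _ h1). }
  have HK : is_linear (fun u => T 0%Z (A1 u)) := is_linear_comp _ _ HA1 HT0.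
  have HC0 : is_linear (fun u => plus (A0 u) (A1 u)) := lin_plus_fun _ _ HA0 HA1.
  pose J := fun u : X => plus (T (-1)%Z (A1 u)) (R0 (plus (A0 u) (A1 u))).
  have HJ : is_linear J := lin_plus_fun _ _ (is_linear_comp _ _ HA1 HT1) (is_linear_comp _ _ HC0 HR0).
  have Rinv : forall u, minus (J u) (T 0%Z (A1 (J u))) = u.
  { intros u. rewrite /J.
    have hb : T (-1)%Z (A1 (R0 (plus (A0 u) (A1 u)))) = zero.
    { have h := I1 (R0 (plus (A0 u) (A1 u))). rewrite R1 (linear_plus _ HT1) I1 plus_zero_l in h. exact h. }
    have hc : T 0%Z (A1 (R0 (plus (A0 u) (A1 u)))) = minus (R0 (plus (A0 u) (A1 u))) (T 0%Z (plus (A0 u) (A1 u))).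
    { have h := I2 (R0 (plus (A0 u) (A1 u))). rewrite hb plus_zero_l R1 (linear_plus _ HT0) in h.
      exact (solve_plus_r _ _ _ h). }
    rewrite (linear_plus _ HA1) (linear_plus _ HT0) FF3 plus_zero_l hc minus_plus_minus. apply I2. }
  have Linv : forall u, J (minus u (T 0%Z (A1 u))) = u.
  { intros u. rewrite /J.
    rewrite (linear_minus _ _ _ HA1) (linear_minus _ _ _ HT1) FF2 minus_zero_r.
    rewrite (linear_minus _ _ _ HA0) -plus_minus_distr.
    have h4 := solve_plus_r _ _ _ (I4 (A1 u)). rewrite h4 minus_plus_minus.
    rewrite (linear_plus _ HR0) R2.
    have h3 := I3 (A1 u). rewrite plus_comm in h3. apply (plus_eq_zero_opp (V:=Y)) in h3.
    rewrite h3 (linear_opp _ _ HR0) R2. apply (plus_cancel_opp (V:=X)). }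
  have HJK : forall u, J (T 0%Z (A1 u)) = T 0%Z (A1 (J u)).
  { intros u. rewrite -{1}(Rinv u).
    rewrite (linear_minus _ _ _ HA1) (linear_minus _ _ _ HT0). apply Linv. }
  split.
  { intros u. split.
    - intros [y ->]. exists (T (-1)%Z y). by rewrite FF1.
    - intros [v ->]. by exists (A1 v). }
  exists J. split.
  { split; [exact HJ|]. split; [exact Rinv|exact Linv]. }
  have HT1A0 : forall u, T (-1)%Z (A0 u) = opp (T (-1)%Z (A1 u)).
  { intros u. have h := I1 u. rewrite (linear_plus _ HT1) in h. exact (plus_eq_zero_opp _ _ h). }
  have HT0A0 : forall u, T 0%Z (A0 u) = minus (minus u (T (-1)%Z (A1 u))) (T 0%Z (A1 u)).
  { intros u. have h := I2 u. rewrite (linear_plus _ HT0) in h. exact (solve_mid _ _ _ _ h). }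
  have HKP : forall u, T 0%Z (A1 u) = T 0%Z (A1 (minus u (T (-1)%Z (A1 u)))).
  { intros u. by rewrite (linear_minus _ _ _ HA1) (linear_minus _ _ _ HT0) FF3 minus_zero_r. }
  have ClaimA : forall w t, T (-1)%Z (A1 (x (Z.of_nat t) w)) =
      minus (T (-1)%Z (A1 c)) (T (-1)%Z (sum_n (fun s : nat => gseq F0 F1 n (Z.of_nat t - Z.of_nat s)%Z w) t)).
  { intros w t.
    have step : forall t, T (-1)%Z (A1 (x (Z.of_nat t) w)) =
       minus (T (-1)%Z (A1 (x (Z.of_nat t - 1)%Z w))) (T (-1)%Z (gseq F0 F1 n (Z.of_nat t) w)).
    { intros t0. have h := f_equal (T (-1)%Z) (Hrec t0 w).
      rewrite (linear_plus _ HT1) HT1A0 in h. exact (opp_solve _ _ _ h). }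
    induction t as [|t IH].
    - rewrite step. have -> : (Z.of_nat 0 - 1)%Z = (-1)%Z by reflexivity.
      rewrite Hxinit sum_O. reflexivity.
    - rewrite step. have -> : (Z.of_nat (S t) - 1)%Z = Z.of_nat t by lia.
      rewrite IH (Gshift (V:=Y) (fun z => gseq F0 F1 n z w) t) (linear_plus _ HT1) minus_minus. reflexivity. }
  have ClaimB : forall w t, minus (x (Z.of_nat t) w) (T (-1)%Z (A1 (x (Z.of_nat t) w))) =
      sum_n (fun s : nat => Vcoef J (T 0%Z) A1 s (gseq F0 F1 n (Z.of_nat t - Z.of_nat s)%Z w)) t.
  { intros w t.
    have step : forall t, minus (x (Z.of_nat t) w) (T (-1)%Z (A1 (x (Z.of_nat t) w))) =
       J (minus (T 0%Z (gseq F0 F1 n (Z.of_nat t) w))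
                (T 0%Z (A1 (minus (x (Z.of_nat t - 1)%Z w) (T (-1)%Z (A1 (x (Z.of_nat t - 1)%Z w))))))).
    { intros t0. have h := f_equal (T 0%Z) (Hrec t0 w).
      rewrite (linear_plus _ HT0) HT0A0 HKP (HKP (x (Z.of_nat t0 - 1)%Z w)) in h.
      have h' := solve_plus _ _ _ h. rewrite -h'. symmetry. apply Linv. }
    induction t as [|t IH].
    - rewrite step. have -> : (Z.of_nat 0 - 1)%Z = (-1)%Z by reflexivity.
      rewrite Hxinit.
      destruct Hc as [y0 Hy0].
      have -> : minus c (T (-1)%Z (A1 c)) = zero by rewrite {2}Hy0 FF1 -Hy0 minus_eq_zero.
      rewrite (linear_zero _ HA1) (linear_zero _ HT0) minus_zero_r sum_O Vcoef_0. reflexivity.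
    - rewrite step. have -> : (Z.of_nat (S t) - 1)%Z = Z.of_nat t by lia.
      rewrite IH sum_shift.
      have E : sum_n (fun s => Vcoef J (T 0%Z) A1 (S s) (gseq F0 F1 n (Z.of_nat (S t) - Z.of_nat (S s))%Z w)) t =
               sum_n (fun s => opp (J (T 0%Z (A1 (Vcoef J (T 0%Z) A1 s (gseq F0 F1 n (Z.of_nat t - Z.of_nat s)%Z w)))))) t.
      { apply sum_n_ext => s. rewrite (Vcoef_S J (T 0%Z) A1 HJ HT0 HA1 HJK).
        do 6 f_equal. lia. }
      rewrite E.
      have HM : is_linear (fun v => opp (J (T 0%Z (A1 v)))) :=
        is_linear_comp _ _ (is_linear_comp _ _ HK HJ) is_linear_opp.
      rewrite -(lin_sum _ _ _ HM) (linear_minus _ _ _ HJ) Vcoef_0.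
      have -> : (Z.of_nat (S t) - Z.of_nat 0)%Z = Z.of_nat (S t) by lia.
      reflexivity. }
  have Hx : forall (t : nat) (w : Omega),
       x (Z.of_nat t) w =
       plus (T (-1)%Z (minus (A1 c)
                (sum_n (fun s : nat => gseq F0 F1 n (Z.of_nat t - Z.of_nat s)%Z w) t)))
            (sum_n (fun s : nat => Vcoef J (T 0%Z) A1 s (gseq F0 F1 n (Z.of_nat t - Z.of_nat s)%Z w)) t).
  { intros t w. rewrite -ClaimB (linear_minus _ _ _ HT1) -ClaimA.
    apply (split_P (V:=X)). }
  split; [exact Hx|].
  intros f Hf Hf0 t w. rewrite Hx (linear_plus _ Hf) Hf0 plus_zero_l (lin_sum _ _ _ Hf). reflexivity.
Qed.

Lemma op_conv_cv {U V : NormedModule C_AbsRing} (S : nat -> U -> V) (L : U -> V) :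
  op_conv S L -> forall y, cv (fun N => S N y) (L y).
Proof.
  intros H y e he. have hy := norm_ge_0 y.
  destruct (H (e / (norm y + 1))) as [N0 h]. apply Rdiv_lt_0_compat; lra.
  exists N0. intros N hN. eapply Rle_trans. apply h. done.
  have -> : e / (norm y + 1) * norm y = e * (norm y / (norm y + 1)) by field; lra.
  have : norm y / (norm y + 1) <= 1.
  { apply Rmult_le_reg_r with (norm y + 1); [lra|]. field_simplify; lra. }
  have : 0 <= norm y / (norm y + 1) by apply Rdiv_le_0_compat; lra.
  nra.
Qed.

Lemma zsub t : (RtoC (1 + t) - RtoC 1)%C = RtoC t.
Proof. apply injective_projections; simpl; ring. Qed.

Lemma Cinv_R t : t <> 0 -> Cinv (RtoC t) = RtoC (/ t).
Proof. intros ht. apply injective_projections; simpl; field; auto. Qed.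

Lemma Cmod_pos t : 0 < t -> Cmod (RtoC t) = t.
Proof. intros ht. rewrite Cmod_R. apply Rabs_right. lra. Qed.

Lemma ps_plus {V : NormedModule C_AbsRing} (a b : nat -> V) t N :
  ps (fun l => plus (a l) (b l)) t N = plus (ps a t N) (ps b t N).
Proof. rewrite /ps -sum_n_plus. apply sum_n_ext => l. exact (scal_distr_l (K := C_AbsRing) _ _ _). Qed.

Lemma ps_scal {V : NormedModule C_AbsRing} (a : nat -> V) k t N :
  ps (fun l => scal (RtoC k) (a l)) t N = scal (RtoC k) (ps a t N).
Proof.
  rewrite /ps -sum_n_scal_l. apply sum_n_ext => l.
  rewrite pow_RtoC !scal_RR Rmult_comm. reflexivity.
Qed.

Lemma ps_lin {U V : NormedModule C_AbsRing} (f : U -> V) (a : nat -> U) t N :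
  is_linear f -> f (ps a t N) = ps (fun l => f (a l)) t N.
Proof.
  intros Hf. rewrite /ps (lin_sum _ _ _ Hf). apply sum_n_ext => l. apply (linear_scal _ Hf).
Qed.

Lemma Az_split {X Y : NormedModule C_AbsRing} (A0 A1 : X -> Y) t u :
  plus (A0 u) (scal (RtoC (1+t)) (A1 u)) = plus (plus (A0 u) (A1 u)) (scal (RtoC t) (A1 u)).
Proof.
  rewrite RtoC_plus.
  have -> : scal (RtoC 1 + RtoC t)%C (A1 u) = plus (scal (RtoC 1) (A1 u)) (scal (RtoC t) (A1 u)).
  { exact (scal_distr_r (K := C_AbsRing) _ _ _). }
  rewrite scal_R1 plus_assoc. reflexivity.
Qed.

Lemma scal_inv_split {V : NormedModule C_AbsRing} t (p q : V) : t <> 0 ->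
  scal (RtoC (/t)) (plus p (scal (RtoC t) q)) = plus (scal (RtoC (/t)) p) q.
Proof. intros ht. rewrite scal_distr_l scal_RR Rinv_l // scal_R1. reflexivity. Qed.

Lemma rearr {V : NormedModule C_AbsRing} (a0 a1 s0 s1 : V) (t : R) : t <> 0 ->
  plus (plus (plus (scal (RtoC (/t)) a0) s0) (plus (scal (RtoC (/t)) a1) s1))
       (scal (RtoC t) (plus (scal (RtoC (/t)) a1) s1))
  = plus (scal (RtoC (/t)) (plus a0 a1)) (plus a1 (plus (plus s0 s1) (scal (RtoC t) s1))).
Proof.
  intros ht.
  rewrite (scal_distr_l (RtoC t)) scal_RR Rinv_r // scal_R1.
  rewrite (scal_distr_l (RtoC (/t)) a0 a1) (plus_swap4 (scal (RtoC (/t)) a0) s0).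
  rewrite -(plus_assoc (plus (scal (RtoC (/t)) a0) (scal (RtoC (/t)) a1))).
  f_equal. rewrite (plus_assoc (plus s0 s1) a1) (plus_comm (plus s0 s1) a1) -(plus_assoc a1). reflexivity.
Qed.

Theorem mainTheorem6
  (X Y : CompleteNormedModule C_AbsRing)
  (A0 A1 : X -> Y) (HA0 : is_linear A0) (HA1 : is_linear A1)
  (eps theta : R) (Heps : 0 < eps) (Htheta : 0 < theta)
  (Rf : C -> Y -> X)
  (HRinv : forall z : C, VW_domain eps theta z ->
             is_bounded_inverse (fun u : X => plus (A0 u) (scal z (A1 u))) (Rf z))
  (Han : analytic_on Rf (VW_domain eps theta))
  (T : Z -> Y -> X) (HT : laurent_expansion Rf T (RtoC 1) eps)
  (Hpole1 : exists y : Y, T (-1)%Z y <> zero)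
  (Hpole2 : forall k : nat, (2 <= k)%nat -> forall y : Y, T (- Z.of_nat k)%Z y = zero)
  (Omega : Type) (n : Z -> Omega -> X)
  (F0 F1 : X -> Y) (HF0 : is_linear F0) (HF1 : is_linear F1)
  (c : X) (Hc : exists y : Y, c = T (-1)%Z y)
  (x : Z -> Omega -> X)
  (Hxinit : forall w : Omega, x (-1)%Z w = c)
  (Hrec : forall (t : nat) (w : Omega),
      plus (A0 (x (Z.of_nat t) w)) (A1 (x (Z.of_nat t - 1)%Z w)) = gseq F0 F1 n (Z.of_nat t) w) :
  (forall u : X, (exists y : Y, u = T (-1)%Z y) <-> (exists v : X, u = T (-1)%Z (A1 v))) /\
  exists J : X -> X,
    is_bounded_inverse (fun u : X => minus u (T 0%Z (A1 u))) J /\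
    (forall (t : nat) (w : Omega),
       x (Z.of_nat t) w =
       plus (T (-1)%Z (minus (A1 c)
                (sum_n (fun s : nat => gseq F0 F1 n (Z.of_nat t - Z.of_nat s)%Z w) t)))
            (sum_n (fun s : nat => Vcoef J (T 0%Z) A1 s (gseq F0 F1 n (Z.of_nat t - Z.of_nat s)%Z w)) t)) /\
    (forall f : X -> C_NormedModule, is_linear f ->
       (forall y : Y, f (T (-1)%Z y) = zero) ->
       forall (t : nat) (w : Omega),
         f (x (Z.of_nat t) w) =
         sum_n (fun s : nat => f (Vcoef J (T 0%Z) A1 s (gseq F0 F1 n (Z.of_nat t - Z.of_nat s)%Z w))) t).
Proof.
  destruct HT as [HTl HTe].
  have HT1 := HTl (-1)%Z.
  have HC0 : is_linear (fun u => plus (A0 u) (A1 u)) := lin_plus_fun _ _ HA0 HA1.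
  set r := Rmin eps 1.
  have hr : 0 < r by (apply Rmin_glb_lt; lra).
  have Lz : forall t, 0 < t < r -> exists Sreg : Y -> X,
     (forall y, cv (ps (fun l => T (Z.of_nat l) y) t) (Sreg y)) /\
     (forall y, Rf (RtoC (1+t)) y = plus (scal (RtoC (/t)) (T (-1)%Z y)) (Sreg y)) /\
     is_bounded_inverse (fun u => plus (A0 u) (scal (RtoC (1+t)) (A1 u))) (Rf (RtoC (1+t))).
  { intros t ht.
    have hr1 : r <= eps by apply Rmin_l. have hr2 : r <= 1 by apply Rmin_r.
    have hz : 0 < Cmod (RtoC (1+t) - RtoC 1) < eps by rewrite zsub Cmod_pos; lra.
    have Hdom : VW_domain eps theta (RtoC (1+t)).
    { right. rewrite zsub Cmod_pos; lra. }
    destruct (HTe _ hz) as [Ssin [Sreg [Hs [Hr Hd]]]].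
    exists Sreg. split; [|split; [|exact (HRinv _ Hdom)]].
    - intros y. have := op_conv_cv _ _ Hr y. rewrite zsub. done.
    - intros y. rewrite Hd. f_equal.
      have hcv := op_conv_cv _ _ Hs y.
      refine (cv_const_eq _ _ _ _ hcv).
      intros N. rewrite zsub Cinv_R; last lra.
      induction N as [|N IH].
      + rewrite sum_O. simpl. f_equal. exact (mult_one_r (K := C_AbsRing) _).
      + rewrite sum_Sn IH.
        rewrite (Hpole2 (S (S N)) ltac:(lia)) scal_zero_r plus_zero_r. reflexivity. }
  have RA : forall u, T (-1)%Z (plus (A0 u) (A1 u)) = zero /\
                plus (T (-1)%Z (A1 u)) (T 0%Z (plus (A0 u) (A1 u))) = u.
  { intros u.
    have := extract (V := X) (T (-1)%Z (plus (A0 u) (A1 u))) (T (-1)%Z (A1 u)) u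
              (fun l => T (Z.of_nat l) (plus (A0 u) (A1 u))) (fun l => T (Z.of_nat l) (A1 u)) r hr.
    intros E. destruct E as [E1 [E2 _]]; [|split; [exact E1|exact E2]].
    intros t ht. destruct (Lz t ht) as [Sreg [Hcv [Hdec [_ [_ HRA]]]]].
    exists (Sreg (plus (A0 u) (A1 u))), (Sreg (A1 u)).
    split; [apply Hcv|]. split; [apply Hcv|].
    have H := HRA u. rewrite Az_split Hdec in H.
    set v := plus (plus (A0 u) (A1 u)) (scal (RtoC t) (A1 u)) in H.
    have Hv : Sreg v = plus (Sreg (plus (A0 u) (A1 u))) (scal (RtoC t) (Sreg (A1 u))).
    { apply (cv_unique (ps (fun l => T (Z.of_nat l) v) t)); [apply Hcv|].
      apply (cv_ext (fun N => plus (ps (fun l => T (Z.of_nat l) (plus (A0 u) (A1 u))) t N)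
                                   (scal (RtoC t) (ps (fun l => T (Z.of_nat l) (A1 u)) t N)))).
      { intros N. rewrite -ps_scal -ps_plus. rewrite /ps. apply sum_n_ext => l.
        rewrite /v. f_equal. symmetry. rewrite (linear_plus _ (HTl _) (plus (A0 u) (A1 u)) (scal (RtoC t) (A1 u))) (linear_scal _ (HTl _)). reflexivity. }
      apply (cv_plus (V:=X)); [apply Hcv|]. apply (cv_scalR (V:=X)). apply Hcv. }
    rewrite Hv /v (linear_plus _ HT1) (linear_scal _ HT1) scal_inv_split in H; last lra.
    rewrite (plus_assoc (scal (RtoC (/t)) (T (-1)%Z (plus (A0 u) (A1 u))))). exact H. }
  have AR : forall y, plus (A0 (T (-1)%Z y)) (A1 (T (-1)%Z y)) = zero /\
      plus (A1 (T (-1)%Z y)) (plus (A0 (T 0%Z y)) (A1 (T 0%Z y))) = y /\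
      plus (plus (A0 (T 1%Z y)) (A1 (T 1%Z y))) (A1 (T 0%Z y)) = zero.
  { intros y.
    have := extract (V := Y) (plus (A0 (T (-1)%Z y)) (A1 (T (-1)%Z y))) (A1 (T (-1)%Z y)) y
              (fun l => plus (A0 (T (Z.of_nat l) y)) (A1 (T (Z.of_nat l) y)))
              (fun l => A1 (T (Z.of_nat l) y)) r hr.
    intros E. destruct E as [E1 [E2 E3]]; [|split; [exact E1|split; [exact E2|exact E3]]].
    intros t ht. destruct (Lz t ht) as [Sreg [Hcv [Hdec [_ [HAR _]]]]].
    exists (plus (A0 (Sreg y)) (A1 (Sreg y))), (A1 (Sreg y)).
    split.
    { apply (cv_ext (fun N => plus (A0 (ps (fun l => T (Z.of_nat l) y) t N)) (A1 (ps (fun l => T (Z.of_nat l) y) t N)))).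
      { intros N. rewrite (ps_lin _ _ _ _ HA0) (ps_lin _ _ _ _ HA1) -ps_plus. reflexivity. }
      exact (cv_lin _ _ _ HC0 (Hcv y)). }
    split.
    { apply (cv_ext (fun N => A1 (ps (fun l => T (Z.of_nat l) y) t N))).
      { intros N. rewrite (ps_lin _ _ _ _ HA1). reflexivity. }
      exact (cv_lin _ _ _ HA1 (Hcv y)). }
    have H := HAR y. rewrite Az_split Hdec in H.
    rewrite (linear_plus _ HA0) (linear_plus _ HA1) (linear_scal _ HA0) (linear_scal _ HA1) in H.
    rewrite rearr in H; last lra. exact H. }
  have Hdom0 : VW_domain eps theta (RtoC 0).
  { left. split. rewrite Cmod_R Rabs_R0. lra. intros E. apply RtoC_inj in E. lra. }
  destruct (HRinv _ Hdom0) as [HR0 [HAR0 HRA0]].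
  have sc0 : forall v : Y, scal (RtoC 0) v = zero by intros v; exact (scal_zero_l (K := C_AbsRing) _).
  apply (alg_main X Y A0 A1 HA0 HA1 T HTl (Rf (RtoC 0)) HR0).
  - intros y. have := HAR0 y. by rewrite sc0 plus_zero_r.
  - intros u. have := HRA0 u. by rewrite sc0 plus_zero_r.
  - intros u. exact (proj1 (RA u)).
  - intros u. exact (proj2 (RA u)).
  - intros y. exact (proj1 (AR y)).
  - intros y. exact (proj1 (proj2 (AR y))).
  - intros y. exact (proj2 (proj2 (AR y))).
  - exact Hc.
  - exact Hxinit.
  - exact Hrec.
Qed.
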